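(* Let $n\ge1$ and $x_k=-\cos\frac{k\pi}{n}$, $k=0,\dots,n$. Assign to each node a base point $b$ and offset $u_k=x_k-b$ as follows: if $x_k\in[-1,-\tfrac12)$ then $b=-1$; if $x_k\in[-\tfrac12,\tfrac12]$ then $b=0$; if $x_k\in(\tfrac12,1]$ then $b=1$. Given reals $\theta_0,\dots,\theta_n$, let $\hat u_k=u_k(1+\theta_k)$ and $\tilde x_k=b+\hat u_k$ (with $b$ the base point of $x_k$). Then for every $k\in\{0,\dots,n\}$, \[ \sum_{j\neq k}|r_{jk}(\mathbf{x},\tilde{\mathbf{x}})|\le\|\theta\|_\infty\bigl(3.2+2.3\,n+4.3\,n\log(n+1)\bigr). \]
   Context: $r_{jk}(\mathbf{x},\tilde{\mathbf{x}}):=\dfrac{\tilde x_k-\tilde x_j}{x_k-x_j}-1$ for $j\neq k$; $\|\theta\|_\infty=\max_k|\theta_k|$; $\log$ is the natural logarithm. *)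

(* Defs.v *)
From Stdlib Require Import Reals Lra Lia List Arith.
Open Scope R_scope.

Definition node (n k : nat) : R := - cos (INR k * PI / INR n).

Definition base (x : R) : R :=
  if Rlt_dec x (-1/2) then -1
  else if Rle_dec x (1/2) then 0
  else 1.

Definition offset (n k : nat) : R := node n k - base (node n k).

Definition pnode (n : nat) (theta : nat -> R) (k : nat) : R :=
  base (node n k) + offset n k * (1 + theta k).

Definition rjk (n : nat) (theta : nat -> R) (j k : nat) : R :=
  (pnode n theta k - pnode n theta j) / (node n k - node n j) - 1.

Definition sup_norm (n : nat) (theta : nat -> R) : R :=
  fold_right Rmax 0 (map (fun k => Rabs (theta k)) (seq 0 (S n))).

Definition rsum (n : nat) (theta : nat -> R) (k : nat) : R :=
  sum_f_R0 (fun j => if Nat.eqb j k then 0 else Rabs (rjk n theta j k)) n.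

(* Main.v *)
Require Import Defs.
From Stdlib Require Import Reals Lra Lia Psatz List.
Open Scope R_scope.
Lemma tan_ge (s : R) : 0 <= s <= PI/2 -> s * cos s <= sin s.
Proof.
  intros [H0 H1].
  assert (HP := PI_4).
  destruct (SIN s H0 ltac:(lra)) as [Hs _].
  destruct (COS s ltac:(lra) H1) as [_ Hc].
  unfold sin_lb, cos_ub, sin_approx, cos_approx, sin_term, cos_term in *.
  rewrite !tech5 in Hs, Hc. simpl sum_f_R0 in Hs, Hc; cbn [Nat.mul Nat.add] in Hs, Hc.
  assert (F3 : INR (Factorial.fact 3) = 6) by (rewrite INR_IZR_INZ; reflexivity).
  assert (F4 : INR (Factorial.fact 4) = 24) by (rewrite INR_IZR_INZ; reflexivity).
  assert (F5 : INR (Factorial.fact 5) = 120) by (rewrite INR_IZR_INZ; reflexivity).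
  assert (F6 : INR (Factorial.fact 6) = 720) by (rewrite INR_IZR_INZ; reflexivity).
  assert (F7 : INR (Factorial.fact 7) = 5040) by (rewrite INR_IZR_INZ; reflexivity).
  assert (F8 : INR (Factorial.fact 8) = 40320) by (rewrite INR_IZR_INZ; reflexivity).
  rewrite F3, F5, F7 in Hs. rewrite F4, F6, F8 in Hc.
  assert (s <= 2) by lra.
  set (t := s*s) in *.
  assert (E1 : sin s >= s - s*t/6 + s*t*t/120 - s*t*t*t/5040) by (unfold t in *; simpl in Hs; lra).
  assert (E2 : cos s <= 1 - t/2 + t*t/24 - t*t*t/720 + t*t*t*t/40320) by (unfold t in *; simpl in Hc; lra).
  assert (Ht : 0 <= t <= 4) by (unfold t; nra).
  assert (s * cos s <= s * (1 - t/2 + t*t/24 - t*t*t/720 + t*t*t*t/40320)) by (apply Rmult_le_compat_l; lra).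
  assert (0 <= s * (t/3 - t*t/30 + t*t*t/840 - t*t*t*t/40320)).
  { apply Rmult_le_pos; [lra|]. assert (0 <= t*t) by nra. assert (0<= t*t*t) by nra. nra. }
  nra.
Qed.

Lemma off_le_sin (t : R) : 0 <= t <= PI ->
  Rabs (- cos t - base (- cos t)) <= sin t.
Proof.
  intros Ht. assert (Hs := sin_ge_0 t (proj1 Ht) (proj2 Ht)).
  assert (Hsc := sin2_cos2 t). unfold Rsqr in Hsc.
  unfold base; destruct (Rlt_dec _ _); [|destruct (Rle_dec _ _)];
  apply Rabs_le; split; nra.
Qed.

Lemma fold_max_ge0 (l : list R) : 0 <= fold_right Rmax 0 l.
Proof. induction l; simpl; [lra|]. eapply Rle_trans; [exact IHl| apply Rmax_r]. Qed.

Lemma fold_max_in (l : list R) x : In x l -> x <= fold_right Rmax 0 l.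
Proof.
  induction l; simpl; [tauto|]. intros [<-|H]. apply Rmax_l.
  eapply Rle_trans; [exact (IHl H)| apply Rmax_r].
Qed.

Lemma sup_ge (n : nat) theta i : (i <= n)%nat -> Rabs (theta i) <= sup_norm n theta.
Proof.
  intros Hi. unfold sup_norm. apply fold_max_in. apply (in_map (fun k => Rabs (theta k))). apply in_seq. lia.
Qed.

Lemma sup_ge0 n theta : 0 <= sup_norm n theta.
Proof. apply fold_max_ge0. Qed.

Lemma ln_le' x y : 0 < x -> x <= y -> ln x <= ln y.
Proof. intros H0 H1. destruct (Req_dec x y) as [->|N]; [lra|]. left; apply ln_increasing; lra. Qed.

Lemma ln_div' a b : 0 < a -> 0 < b -> ln (a / b) = ln a - ln b.
Proof. intros. unfold Rdiv. rewrite ln_mult, ln_Rinv; try lra. apply Rinv_0_lt_compat; lra. Qed.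

Fixpoint H (m : nat) : R := match m with O => 0 | S p => H p + 1 / INR (S p) end.

Lemma ln_lb (y : R) : 0 < y -> 1 - 1 / y <= ln y.
Proof.
  intros Hy. assert (E := exp_ineq1_le (- ln y)).
  rewrite exp_Ropp, exp_ln in E by lra. unfold Rdiv. lra.
Qed.

Lemma H_le (m : nat) : H (S m) <= 1 + ln (INR (S m)).
Proof.
  induction m.
  - simpl. rewrite ln_1. lra.
  - change (H (S (S m))) with (H (S m) + 1 / INR (S (S m))).
    assert (E := ln_lb (INR (S (S m)) / INR (S m))).
    assert (P1 : 0 < INR (S m)) by (apply lt_0_INR; lia).
    assert (P2 : 0 < INR (S (S m))) by (apply lt_0_INR; lia).
    rewrite ln_div' in E by lra.
    assert (1 - 1 / (INR (S (S m)) / INR (S m)) = 1 / INR (S (S m))).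
    { rewrite S_INR with (n := S m) in *. field. lra. }
    assert (0 < INR (S (S m)) / INR (S m)) by (apply Rdiv_lt_0_compat; lra).
    specialize (E H1). lra.
Qed.

Lemma H_le_n (m n : nat) : (m <= n)%nat -> H m <= 1 + ln (INR n + 1).
Proof.
  intros Hm. assert (L: 0 <= ln (INR n + 1)).
  { rewrite <- ln_1. apply ln_le'; [lra|]. assert (0 <= INR n) by apply pos_INR. lra. }
  destruct m. simpl. lra.
  eapply Rle_trans. apply H_le. apply Rplus_le_compat_l. apply ln_le'.
  apply lt_0_INR; lia. rewrite <- S_INR. apply le_INR. lia.
Qed.

Definition g (k j : nat) : R := if Nat.eqb j k then 0 else 1 / Rabs (INR j - INR k).

Lemma sum_g (k N : nat) : sum_f_R0 (g k) N + H (k - S N) = H k + H (N - k).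
Proof.
  induction N.
  - change (sum_f_R0 (g k) 0) with (g k 0). unfold g. destruct k.
    + simpl. lra.
    + replace (Nat.eqb 0 (S k)) with false by reflexivity.
      replace (S k - 1)%nat with k by lia. replace (0 - S k)%nat with 0%nat by lia.
      change (H (S k)) with (H k + 1 / INR (S k)). change (H 0) with 0.
      rewrite Rminus_0_l, Rabs_Ropp, Rabs_right. lra. apply Rle_ge, pos_INR.
  - simpl (sum_f_R0 _ (S N)). unfold g at 2.
    destruct (Nat.lt_total (S N) k) as [Hl|[He|Hg]].
    + replace (Nat.eqb (S N) k) with false by (symmetry; apply Nat.eqb_neq; lia).
      replace (N - k)%nat with 0%nat in IHN by lia. replace (S N - k)%nat with 0%nat by lia.
      replace (k - S N)%nat with (S (k - S (S N))) in IHN by lia.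
      cbn [H] in IHN |- *.
      replace (INR (S (k - S (S N)))) with (INR k - INR (S N)) in IHN.
      2:{ rewrite <- minus_INR by lia. f_equal. lia. }
      rewrite Rabs_left1. 2:{ apply Rle_minus, le_INR. lia. }
      replace (- (INR (S N) - INR k)) with (INR k - INR (S N)) by ring. lra.
    + subst k. rewrite Nat.eqb_refl. replace (S N - S N)%nat with 0%nat.
      replace (N - S N)%nat with 0%nat in IHN by lia. replace (S N - S (S N))%nat with 0%nat by lia.
      replace (S N - S N)%nat with 0%nat in IHN by lia. cbn [H] in *. lra. lia.
    + replace (Nat.eqb (S N) k) with false by (symmetry; apply Nat.eqb_neq; lia).
      replace (k - S N)%nat with 0%nat in IHN by lia. replace (k - S (S N))%nat with 0%nat by lia.
      replace (S N - k)%nat with (S (N - k)) by lia. cbn [H] in *.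
      replace (INR (S (N - k))) with (INR (S N) - INR k).
      2:{ rewrite <- minus_INR by lia. f_equal. lia. }
      rewrite Rabs_right. 2:{ apply Rge_minus, Rle_ge, le_INR. lia. } lra.
Qed.

Lemma abs_sin (h : R) : Rabs h <= PI -> Rabs (sin h) = sin (Rabs h).
Proof.
  intros Hh. destruct (Rle_dec 0 h).
  - rewrite (Rabs_right h) in * by lra. apply Rabs_right, Rle_ge, sin_ge_0; lra.
  - rewrite (Rabs_left h) in * by lra.
    assert (0 <= sin (-h)) by (apply sin_ge_0; lra).
    rewrite sin_neg in *. rewrite Rabs_left1; lra.
Qed.

Lemma abs_cos (h : R) : cos h = cos (Rabs h).
Proof. destruct (Rle_dec 0 h). rewrite Rabs_right; lra. rewrite Rabs_left, cos_neg; lra. Qed.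

Lemma key (a b d nR : R) : 0 <= a <= PI -> 0 <= b <= PI -> 0 < nR ->
  a - b = d * PI / nR -> Rabs d <= nR ->
  (sin a + sin b) * Rabs d <= nR * Rabs (cos b - cos a).
Proof.
  intros Ha Hb Hn Hab Hd.
  assert (HPI := PI_RGT_0). assert (HP2 := PI2_1).
  rewrite form3, form2.
  set (h := (a - b)/2). set (m := (a+b)/2).
  replace ((b - a)/2) with (-h) by (unfold h; field).
  replace ((b + a)/2) with m by (unfold m; field).
  rewrite sin_neg.
  assert (Hm : 0 <= sin m) by (apply sin_ge_0; unfold m; lra).
  assert (Hs : Rabs h = Rabs d * PI / (2 * nR)).
  { unfold h. rewrite Hab. unfold Rdiv. rewrite !Rabs_mult, Rabs_inv, (Rabs_right PI), (Rabs_right nR), (Rabs_right (/2)) by lra. field. lra. }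
  assert (HsP : Rabs h <= PI/2).
  { rewrite Hs. apply (Rmult_le_reg_r (2*nR)); [lra|]. unfold Rdiv. field_simplify; [|lra]. nra. }
  replace (Rabs (-2 * - sin h * sin m)) with (2 * Rabs (sin h) * sin m).
  2:{ rewrite !Rabs_mult, (Rabs_right (sin m)) by lra. rewrite Rabs_Ropp. rewrite (Rabs_left (-2)) by lra. ring. }
  rewrite abs_sin by lra. rewrite (abs_cos h).
  set (s := Rabs h) in *.
  assert (T := tan_ge s (conj (Rabs_pos h) HsP)).
  assert (Hc : 0 <= cos s) by (apply cos_ge_0; unfold s in *; assert (0 <= Rabs h) by apply Rabs_pos; lra).
  assert (Ed : Rabs d = 2 * nR * s / PI) by (rewrite Hs; field; lra).
  rewrite Ed.
  assert (0 <= s) by apply Rabs_pos.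
  assert (2 * nR * s / PI * cos s <= nR * (s * cos s)).
  { apply (Rmult_le_reg_r PI); [lra|]. unfold Rdiv. field_simplify; [|lra].
    assert (0 <= nR * s * cos s) by (apply Rmult_le_pos; nra). nra. }
  assert (nR * (s * cos s) <= nR * sin s) by (apply Rmult_le_compat_l; lra).
  assert (E: 2 * cos s * sin m * (2 * nR * s / PI) = (2 * sin m) * (2 * nR * s / PI * cos s)) by ring.
  rewrite E. 
  replace (nR * (2 * sin s * sin m)) with ((2 * sin m) * (nR * sin s)) by ring.
  apply Rmult_le_compat_l; lra.
Qed.

Lemma pw (n : nat) (theta : nat -> R) (j k : nat) :
  (1 <= n)%nat -> (j <= n)%nat -> (k <= n)%nat -> j <> k ->
  Rabs (rjk n theta j k) <= sup_norm n theta * INR n * (1 / Rabs (INR j - INR k)).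
Proof.
  intros Hn Hj Hk Hjk.
  assert (HPI := PI_RGT_0).
  assert (Hn0 : 0 < INR n) by (apply lt_0_INR; lia).
  assert (Hjn : INR j <= INR n) by (apply le_INR; lia).
  assert (Hkn : INR k <= INR n) by (apply le_INR; lia).
  assert (Hj0 := pos_INR j). assert (Hk0 := pos_INR k).
  set (a := INR k * PI / INR n). set (b := INR j * PI / INR n).
  assert (Ha : 0 <= a <= PI).
  { unfold a; split. apply Rmult_le_pos; [nra| left; apply Rinv_0_lt_compat; lra].
    apply (Rmult_le_reg_r (INR n)); [lra|]. unfold Rdiv. field_simplify; nra. }
  assert (Hb : 0 <= b <= PI).
  { unfold b; split. apply Rmult_le_pos; [nra| left; apply Rinv_0_lt_compat; lra].
    apply (Rmult_le_reg_r (INR n)); [lra|]. unfold Rdiv. field_simplify; nra. }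
  assert (Nk : node n k = - cos a) by reflexivity.
  assert (Nj : node n j = - cos b) by reflexivity.
  set (M := sup_norm n theta).
  assert (HM := sup_ge0 n theta). fold M in HM.
  assert (Tk := sup_ge n theta k Hk). assert (Tj := sup_ge n theta j Hj). fold M in Tk, Tj.
  assert (Uk := off_le_sin a Ha). assert (Uj := off_le_sin b Hb).
  assert (Ok : offset n k = - cos a - base (- cos a)) by (unfold offset; rewrite Nk; reflexivity).
  assert (Oj : offset n j = - cos b - base (- cos b)) by (unfold offset; rewrite Nj; reflexivity).
  assert (D : node n k - node n j <> 0).
  { rewrite Nk, Nj. intro E. assert (cos a = cos b) by lra.
    assert (Eab : a = b) by (apply cos_inj; lra). unfold a, b in Eab.
    assert (H9 : INR k = INR j).
    { apply (Rmult_eq_reg_r (PI / INR n)). unfold Rdiv in *. lra.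
      apply Rmult_integral_contrapositive; split; [lra| apply Rinv_neq_0_compat; lra]. }
    apply INR_eq in H9. lia. }
  set (uk := offset n k) in *. set (uj := offset n j) in *.
  assert (R : rjk n theta j k = (uk * theta k - uj * theta j) / (node n k - node n j)).
  { unfold rjk, pnode. fold uk uj.
    replace (base (node n k)) with (node n k - uk) by (unfold uk, offset; ring).
    replace (base (node n j)) with (node n j - uj) by (unfold uj, offset; ring).
    field. exact D. }
  rewrite R.
  assert (HE : Rabs (uk * theta k - uj * theta j) <= M * (sin a + sin b)).
  { rewrite <- Ok in Uk. rewrite <- Oj in Uj.
    eapply Rle_trans. apply Rabs_triang. rewrite Rabs_Ropp, !Rabs_mult.
    assert (Rabs uk * Rabs (theta k) <= sin a * M) by (apply Rmult_le_compat; try apply Rabs_pos; lra).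
    assert (Rabs uj * Rabs (theta j) <= sin b * M) by (apply Rmult_le_compat; try apply Rabs_pos; lra).
    lra. }
  assert (K := key a b (INR k - INR j) (INR n) Ha Hb Hn0).
  assert (K' : (sin a + sin b) * Rabs (INR j - INR k) <= INR n * Rabs (node n k - node n j)).
  { rewrite Nk, Nj. replace (- cos a - - cos b) with (cos b - cos a) by ring.
    rewrite <- Rabs_Ropp. replace (- (INR j - INR k)) with (INR k - INR j) by ring.
    apply K. unfold a, b. field. lra. apply Rabs_le. split; lra. }
  assert (Dp : 0 < Rabs (node n k - node n j)) by (apply Rabs_pos_lt; exact D).
  assert (Jp : 0 < Rabs (INR j - INR k)).
  { apply Rabs_pos_lt. intro E. assert (H9 : INR j = INR k) by lra. apply INR_eq in H9. lia. }
  unfold Rdiv. rewrite Rabs_mult, Rabs_inv.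
  apply (Rmult_le_reg_r (Rabs (node n k - node n j) * Rabs (INR j - INR k))). nra.
  field_simplify; try lra.
  assert (M * ((sin a + sin b) * Rabs (INR j - INR k)) <= M * (INR n * Rabs (node n k - node n j))) by (apply Rmult_le_compat_l; lra).
  assert (Rabs (uk * theta k - uj * theta j) * Rabs (INR j - INR k) <= M * (sin a + sin b) * Rabs (INR j - INR k)) by (apply Rmult_le_compat_r; lra).
  nra.
Qed.

Theorem theorem4 (n : nat) (theta : nat -> R) (k : nat) :
  (1 <= n)%nat -> (k <= n)%nat ->
  rsum n theta k <=
    sup_norm n theta * (32/10 + 23/10 * INR n + 43/10 * INR n * ln (INR n + 1)).
Proof.
  intros Hn Hk. unfold rsum.
  set (M := sup_norm n theta).
  assert (HM := sup_ge0 n theta). fold M in HM.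
  assert (S1 : sum_f_R0 (fun j => if Nat.eqb j k then 0 else Rabs (rjk n theta j k)) n
            <= sum_f_R0 (fun j => g k j * (M * INR n)) n).
  { apply sum_Rle. intros j Hj. unfold g. destruct (Nat.eqb_spec j k). lra.
    rewrite Rmult_comm. apply pw; lia. }
  rewrite <- scal_sum in S1.
  assert (Sg := sum_g k n). replace (k - S n)%nat with 0%nat in Sg by lia. cbn [H] in Sg.
  assert (H1 := H_le_n k n Hk). assert (H2 := H_le_n (n - k) n ltac:(lia)).
  assert (Hn0 : 0 < INR n) by (apply lt_0_INR; lia).
  assert (L: 0 <= ln (INR n + 1)).
  { rewrite <- ln_1. apply ln_le'; lra. }
  assert (Sb : sum_f_R0 (g k) n <= 2 + 2 * ln (INR n + 1)) by lra.
  eapply Rle_trans. exact S1.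
  assert (0 <= M * INR n) by nra.
  assert (sum_f_R0 (g k) n * (M * INR n) <= (2 + 2 * ln (INR n + 1)) * (M * INR n)) by (apply Rmult_le_compat_r; lra).
  assert (0 <= M * INR n * ln (INR n + 1)) by (apply Rmult_le_pos; lra).
  nra.
Qed.
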